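(* Let $n\ge 4$, let $a_1,\dots,a_n$ be real numbers, $C(t)=\sum_{j=1}^n a_j\cos jt$, $S(t)=\sum_{j=1}^n a_j\sin jt$. Let $m$ be an integer with $2\le m\le n/2$, let $t_1,\dots,t_m\in(0,\pi)$ be pairwise distinct, and suppose there are real numbers $b_m,\dots,b_{n-m}$ such that for all real $t$ $$S(t)=\prod_{j=1}^m(\cos t-\cos t_j)\cdot\sum_{k=m}^{n-m}b_k\sin kt .$$ Then $C(t_1)=C(t_2)=\dots=C(t_m)$. *)

(* Defs.v *)
From Stdlib Require Import Reals List.
Open Scope R_scope.

(* sum_{k=lo}^{hi} f k  (empty, i.e. 0, when hi < lo) *)
Definition rsum (lo hi : nat) (f : nat -> R) : R :=
  fold_right Rplus 0 (map f (seq lo (S hi - lo))).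

(* prod_{k=lo}^{hi} f k  (empty, i.e. 1, when hi < lo) *)
Definition rprod (lo hi : nat) (f : nat -> R) : R :=
  fold_right Rmult 1 (map f (seq lo (S hi - lo))).

Definition Cpoly (n : nat) (a : nat -> R) (t : R) : R :=
  rsum 1 n (fun j => a j * cos (INR j * t)).
Definition Spoly (n : nat) (a : nat -> R) (t : R) : R :=
  rsum 1 n (fun j => a j * sin (INR j * t)).

(* Main.v *)
Require Import Defs.
From Stdlib Require Import Reals List.
From Stdlib Require Import Lia Lra.
Open Scope R_scope.

Definition tl := list (nat * R).

Fixpoint Tr (F : R -> R) (l : tl) (t : R) : R :=
  match l with nil => 0 | p :: l' => snd p * F (INR (fst p) * t) + Tr F l' t end.

Definition step (c : R) (l : tl) : tl :=
  flat_map (fun p => (S (fst p), snd p / 2) :: (pred (fst p), snd p / 2)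
                       :: (fst p, - (c * snd p)) :: nil) l.

Fixpoint iter (cs : list R) (l : tl) : tl :=
  match cs with nil => l | c :: cs' => step c (iter cs' l) end.

Lemma pred_INR j : (1 <= j)%nat -> INR (pred j) = INR j - 1.
Proof. intros. destruct j; [lia|]. simpl pred. rewrite S_INR. ring. Qed.

Lemma cos_step j t : (1 <= j)%nat ->
  cos (INR (S j) * t) = 2 * (cos t * cos (INR j * t)) - cos (INR (pred j) * t).
Proof.
  intros H. rewrite S_INR, pred_INR by auto.
  replace ((INR j + 1) * t) with (INR j * t + t) by ring.
  replace ((INR j - 1) * t) with (INR j * t - t) by ring.
  rewrite cos_plus, cos_minus. ring.
Qed.

Lemma sin_step j t : (1 <= j)%nat ->
  sin (INR (S j) * t) = 2 * (cos t * sin (INR j * t)) - sin (INR (pred j) * t).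
Proof.
  intros H. rewrite S_INR, pred_INR by auto.
  replace ((INR j + 1) * t) with (INR j * t + t) by ring.
  replace ((INR j - 1) * t) with (INR j * t - t) by ring.
  rewrite sin_plus, sin_minus. ring.
Qed.

Lemma Tr_step F c l t :
  (forall j, (1 <= j)%nat ->
     F (INR (S j) * t) = 2 * (cos t * F (INR j * t)) - F (INR (pred j) * t)) ->
  (forall p, In p l -> (1 <= fst p)%nat) ->
  Tr F (step c l) t = (cos t - c) * Tr F l t.
Proof.
  intros HF. induction l as [|[j v] l IH]; intros H.
  - simpl. ring.
  - change (step c ((j, v) :: l)) with
      ((S j, v / 2) :: (pred j, v / 2) :: (j, - (c * v)) :: step c l).
    cbn [Tr fst snd].
    rewrite IH by (intros; apply H; right; auto).
    assert (Hj : (1 <= j)%nat) by (apply (H (j, v)); left; auto).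
    rewrite (HF j Hj). field.
Qed.

Lemma iter_bounds cs l lo hi : (length cs <= lo)%nat ->
  (forall p, In p l -> (lo <= fst p <= hi)%nat) ->
  forall p, In p (iter cs l) -> (lo - length cs <= fst p <= hi + length cs)%nat.
Proof.
  induction cs as [|c cs IH]; simpl.
  - intros _ Hl p Hp. specialize (Hl p Hp). lia.
  - intros Hlen Hl p Hp. unfold step in Hp. apply in_flat_map in Hp.
    destruct Hp as [q [Hq Hpq]]. specialize (IH ltac:(lia) Hl q Hq).
    simpl in Hpq. destruct Hpq as [<-|[<-|[<-|[]]]]; simpl; lia.
Qed.

Lemma Tr_iter F cs l lo hi t :
  (forall c l, (forall p, In p l -> (1 <= fst p)%nat) ->
     Tr F (step c l) t = (cos t - c) * Tr F l t) ->
  (length cs <= lo)%nat ->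
  (forall p, In p l -> (lo <= fst p <= hi)%nat) ->
  Tr F (iter cs l) t = fold_right Rmult 1 (map (fun c => cos t - c) cs) * Tr F l t.
Proof.
  intros HS. induction cs as [|c cs IH]; simpl; intros Hlen Hl.
  - ring.
  - rewrite HS. rewrite IH by (auto; lia). ring.
    intros p Hp. pose proof (iter_bounds cs l lo hi ltac:(lia) Hl p Hp). lia.
Qed.

Definition sumseq (s : list nat) (f : nat -> R) := fold_right Rplus 0 (map f s).

Lemma sumseq_ext_in s f g : (forall j, In j s -> f j = g j) -> sumseq s f = sumseq s g.
Proof.
  induction s as [|x s IH]; intros H; unfold sumseq in *; simpl; auto.
  rewrite (H x (or_introl eq_refl)). rewrite IH; auto. intros; apply H; right; auto.
Qed.

Lemma sumseq_zero_in s f : (forall j, In j s -> f j = 0) -> sumseq s f = 0.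
Proof.
  induction s as [|x s IH]; intros H; unfold sumseq in *; simpl; auto.
  rewrite (H x (or_introl eq_refl)). rewrite IH. ring. intros; apply H; right; auto.
Qed.

Lemma sumseq_plus s f g : sumseq s (fun j => f j + g j) = sumseq s f + sumseq s g.
Proof. induction s; unfold sumseq in *; simpl; [ring|rewrite IHs; ring]. Qed.

Lemma sumseq_minus s f g : sumseq s (fun j => f j - g j) = sumseq s f - sumseq s g.
Proof. induction s; unfold sumseq in *; simpl; [ring|rewrite IHs; ring]. Qed.

Lemma sumseq_lin3 s f g k c :
  sumseq s f + sumseq s g - c * sumseq s k = sumseq s (fun j => f j + g j - c * k j).
Proof. induction s; unfold sumseq in *; simpl; [ring|rewrite <- IHs; ring]. Qed.

Lemma sumseq_mul2 s f : sumseq s f * 2 = sumseq s (fun j => f j * 2).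
Proof. induction s; unfold sumseq in *; simpl; [ring|rewrite <- IHs; ring]. Qed.

Lemma sumseq_app s1 s2 f : sumseq (s1 ++ s2) f = sumseq s1 f + sumseq s2 f.
Proof. induction s1; unfold sumseq in *; simpl; [ring|rewrite IHs1; ring]. Qed.

Lemma sumseq_ind a k j0 h : (a <= j0 < a + k)%nat ->
  sumseq (seq a k) (fun j => if Nat.eqb j j0 then h j else 0) = h j0.
Proof.
  revert a. induction k; intros a Ha; [lia|].
  change (seq a (S k)) with (a :: seq (S a) k).
  unfold sumseq; simpl map; simpl fold_right. fold (sumseq (seq (S a) k) (fun j => if Nat.eqb j j0 then h j else 0)).
  destruct (Nat.eqb_spec a j0).
  - subst. rewrite sumseq_zero_in. ring.
    intros j Hj. apply in_seq in Hj. destruct (Nat.eqb_spec j j0); [lia|auto].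
  - rewrite IHk by lia. ring.
Qed.

Fixpoint coef (l : tl) (k : nat) : R :=
  match l with nil => 0 | p :: l' => (if Nat.eqb k (fst p) then snd p else 0) + coef l' k end.

Lemma Tr_collect F l n t : (forall p, In p l -> (fst p <= n)%nat) ->
  Tr F l t = sumseq (seq 0 (S n)) (fun j => coef l j * F (INR j * t)).
Proof.
  induction l as [|[j v] l IH]; intros H.
  - symmetry; apply sumseq_zero_in; intros; simpl; ring.
  - change (Tr F ((j,v)::l) t) with (v * F (INR j * t) + Tr F l t).
    rewrite IH by (intros; apply H; right; auto).
    rewrite (sumseq_ext_in _ (fun k => coef ((j,v)::l) k * F (INR k * t)) (fun k => (if Nat.eqb k j then v * F (INR k * t) else 0)
                                         + coef l k * F (INR k * t))).
    2:{ intros k _. simpl. destruct (Nat.eqb k j); ring. }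
    rewrite sumseq_plus. rewrite sumseq_ind. reflexivity.
    specialize (H (j, v) (or_introl eq_refl)). simpl in H. lia.
Qed.

Lemma uniq N d : (forall t, sumseq (seq 0 (S N)) (fun j => d j * sin (INR j * t)) = 0) ->
  forall j, (1 <= j <= N)%nat -> d j = 0.
Proof.
  revert d. induction N; intros d H.
  - intros; lia.
  - assert (HN : 0 < INR (S N)) by (apply lt_0_INR; lia).
    set (h := PI / INR (S N)).
    set (d' := fun j => d j * (cos (INR j * h) - cos (INR (S N) * h))).
    assert (H' : forall t, sumseq (seq 0 (S N)) (fun j => d' j * sin (INR j * t)) = 0).
    { intros t.
      assert (E : sumseq (seq 0 (S (S N))) (fun j => d' j * sin (INR j * t)) * 2 =
        sumseq (seq 0 (S (S N))) (fun j => d j * sin (INR j * (t + h)))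
        + sumseq (seq 0 (S (S N))) (fun j => d j * sin (INR j * (t - h)))
        - 2 * cos (INR (S N) * h) * sumseq (seq 0 (S (S N))) (fun j => d j * sin (INR j * t))).
      { rewrite sumseq_lin3, sumseq_mul2. apply sumseq_ext_in. intros j _.
        unfold d'. rewrite !Rmult_plus_distr_l.
        replace (INR j * (t - h)) with (INR j * t - INR j * h) by ring.
        rewrite sin_plus, sin_minus. ring. }
      rewrite !H in E.
      rewrite (seq_S (S N)) in E. rewrite sumseq_app in E.
      rewrite Nat.add_0_l in E.
      unfold sumseq at 2 in E. cbn [map fold_right] in E.
      assert (Hz : d' (S N) = 0) by (unfold d'; rewrite Rminus_diag_eq by reflexivity; ring).
      rewrite Hz in E. lra. }
    specialize (IHN d' H').
    assert (Hlow : forall j, (1 <= j <= N)%nat -> d j = 0).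
    { intros j Hj. specialize (IHN j Hj). unfold d' in IHN.
      apply Rmult_integral in IHN. destruct IHN as [|IH]; auto. exfalso.
      replace (INR (S N) * h) with PI in IH by (unfold h; field; lra).
      rewrite cos_PI in IH.
      assert (Hj1 : 0 < INR j) by (apply lt_0_INR; lia).
      assert (Hj2 : INR j < INR (S N)) by (apply lt_INR; lia).
      assert (0 < INR j * h < PI).
      { unfold h. pose proof PI_RGT_0. split.
        - apply Rmult_lt_0_compat; auto. apply Rdiv_lt_0_compat; lra.
        - replace PI with (INR (S N) * (PI / INR (S N))) at 2 by (field; lra).
          apply Rmult_lt_compat_r; auto. apply Rdiv_lt_0_compat; lra. }
      pose proof (cos_decreasing_1 (INR j * h) PI ltac:(lra) ltac:(lra) ltac:(pose proof PI_RGT_0; lra) ltac:(lra) ltac:(lra)).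
      rewrite cos_PI in H1. lra. }
    intros j Hj. destruct (Nat.eq_dec j (S N)) as [->|Hne]; [|apply Hlow; lia].
    specialize (H (PI / (2 * INR (S N)))).
    rewrite (seq_S (S N)), sumseq_app in H.
    rewrite sumseq_zero_in in H.
    + rewrite Nat.add_0_l in H. unfold sumseq in H. cbn [map fold_right] in H.
      replace (INR (S N) * (PI / (2 * INR (S N)))) with (PI / 2) in H by (field; lra).
      rewrite sin_PI2 in H. lra.
    + intros k Hk. apply in_seq in Hk. destruct k.
      * simpl. rewrite Rmult_0_l, sin_0. ring.
      * rewrite Hlow by lia. ring.
Qed.

Lemma prod_zero (s : list R) f x : In x s -> f x = 0 -> fold_right Rmult 1 (map f s) = 0.
Proof.
  induction s; simpl; intros Hi Hf; [contradiction|].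
  destruct Hi as [<-|Hi]; [rewrite Hf; ring|rewrite IHs by auto; ring].
Qed.

Lemma Tr_map F (b : nat -> R) s t :
  Tr F (map (fun k => (k, b k)) s) t = fold_right Rplus 0 (map (fun k => b k * F (INR k * t)) s).
Proof. induction s; simpl; auto. rewrite IHs. reflexivity. Qed.

Theorem lemma5 (n m : nat) (a tt b : nat -> R) :
  (4 <= n)%nat ->
  (2 <= m)%nat -> (2 * m <= n)%nat ->
  (forall i, (1 <= i <= m)%nat -> 0 < tt i < PI) ->
  (forall i j, (1 <= i <= m)%nat -> (1 <= j <= m)%nat -> i <> j -> tt i <> tt j) ->
  (forall t : R,
     Spoly n a t =
     rprod 1 m (fun j => cos t - cos (tt j)) *
     rsum m (n - m) (fun k => b k * sin (INR k * t))) ->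
  forall i j, (1 <= i <= m)%nat -> (1 <= j <= m)%nat ->
    Cpoly n a (tt i) = Cpoly n a (tt j).
Proof.
  intros Hn Hm Hmn Ht Hd HS i j Hi Hj.
  set (cs := map (fun k => cos (tt k)) (seq 1 m)).
  set (l0 := map (fun k => (k, b k)) (seq m (S (n - m) - m))).
  set (g := iter cs l0).
  assert (Hl0 : forall p, In p l0 -> (m <= fst p <= n - m)%nat).
  { intros p Hp. unfold l0 in Hp. apply in_map_iff in Hp. destruct Hp as [k [<- Hk]].
    apply in_seq in Hk. simpl. lia. }
  assert (Hlen : length cs = m) by (unfold cs; rewrite length_map, length_seq; auto).
  assert (Hg : forall p, In p g -> (fst p <= n)%nat).
  { intros p Hp. pose proof (iter_bounds cs l0 m (n - m) ltac:(lia) Hl0 p Hp). lia. }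
  assert (Hprod : forall t, rprod 1 m (fun k => cos t - cos (tt k)) =
            fold_right Rmult 1 (map (fun c => cos t - c) cs)).
  { intros t. unfold rprod, cs. rewrite map_map. replace (S m - 1)%nat with m by lia. reflexivity. }
  assert (HS' : forall t, Spoly n a t = Tr sin g t).
  { intros t. rewrite HS, Hprod. unfold g.
    rewrite (Tr_iter sin cs l0 m (n - m) t); [| |lia|auto].
    - unfold l0, rsum. rewrite Tr_map. reflexivity.
    - intros c l Hl. apply Tr_step; auto. intros; apply sin_step; auto. }
  assert (Hcoef : forall k, (1 <= k <= n)%nat -> a k = coef g k).
  { intros k Hk.
    assert (U := uniq n (fun k => a k - coef g k)).
    cut (a k - coef g k = 0); [lra|]. apply U; auto.
    intros t.
    rewrite (sumseq_ext_in _ _ (fun j => a j * sin (INR j * t) - coef g j * sin (INR j * t)))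
      by (intros; ring).
    rewrite sumseq_minus. rewrite <- (Tr_collect sin g n t Hg).
    rewrite <- HS'. change (seq 0 (S n)) with (0%nat :: seq 1 n).
    unfold sumseq. simpl. rewrite Rmult_0_l, sin_0, Rmult_0_r, Rplus_0_l.
    unfold Spoly, rsum. replace (S n - 1)%nat with n by lia. ring. }
  assert (HC : forall t, Cpoly n a t =
            fold_right Rmult 1 (map (fun c => cos t - c) cs) * Tr cos l0 t - coef g 0).
  { intros t. unfold g.
    rewrite <- (Tr_iter cos cs l0 m (n - m) t); [| |lia|auto].
    2:{ intros c l Hl. apply Tr_step; auto. intros; apply cos_step; auto. }
    fold g. rewrite (Tr_collect cos g n t Hg).
    change (seq 0 (S n)) with (0%nat :: seq 1 n).
    unfold sumseq. cbn [map fold_right]. change (INR 0) with 0.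
    rewrite Rmult_0_l, cos_0, Rmult_1_r.
    unfold Cpoly, rsum. replace (S n - 1)%nat with n by lia.
    fold (sumseq (seq 1 n) (fun j => a j * cos (INR j * t))).
    fold (sumseq (seq 1 n) (fun j => coef g j * cos (INR j * t))).
    rewrite (sumseq_ext_in _ _ (fun j => coef g j * cos (INR j * t))). ring.
    intros k Hk. apply in_seq in Hk. rewrite Hcoef by lia. reflexivity. }
  rewrite !HC.
  assert (Ii : In (cos (tt i)) cs) by (apply (in_map (fun k => cos (tt k))); apply in_seq; lia).
  assert (Ij : In (cos (tt j)) cs) by (apply (in_map (fun k => cos (tt k))); apply in_seq; lia).
  rewrite (prod_zero cs _ (cos (tt i)) Ii) by ring.
  rewrite (prod_zero cs _ (cos (tt j)) Ij) by ring.
  ring.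
Qed.
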